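(* Let $(M,d)$ be a metric space, $\mathsf{P}\subseteq M$ a set of $n$ points, $1\le \ell\le k\le n$ integers, $m=\lfloor k/\ell\rfloor$, and $c\ge1$. Let $Q=\{q_1,\dots,q_m\}\subseteq\mathsf{P}$ satisfy $\sum_{p\in\mathsf{P}} d_Q(p,1)\le c\,\sigma_{\mathrm{med}}$, where $\sigma_{\mathrm{med}}=\min_{S\subseteq\mathsf{P},|S|=m}\sum_{p\in\mathsf{P}} d_S(p,1)$. Let $C\subseteq\mathsf{P}$ with $|C|=k$ and $C\supseteq\bigcup_{i=1}^m N_{\mathsf{P}}(q_i,\ell)$, and let $\sigma_{\mathrm{alg}}=\sum_{p\in\mathsf{P}} d_C(p,\ell)$ and $\sigma_{\mathrm{opt}}=\min_{C'\subseteq\mathsf{P},|C'|=k}\sum_{p\in\mathsf{P}} d_{C'}(p,\ell)$. Then $\sigma_{\mathrm{alg}}\le \sigma_{\mathrm{opt}}+2c\,\sigma_{\mathrm{med}}$.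
   Context: For a finite set $S\subseteq M$, a point $p\in M$ and an integer $1\le i\le |S|$, $d_S(p,i)$ denotes the radius of the smallest closed ball centered at $p$ containing at least $i$ points of $S$. The $i$ nearest neighbors of $p$ in $S$ are determined by ordering $s\in S$ lexicographically by $(d(p,s),\text{index of }s)$; $N_S(p,i)$ is the set of the first $i$ points in this order, so $|N_S(p,i)|=i$. *)

(* Defs.v *)
From HB Require Import structures.
From mathcomp Require Import all_boot all_order all_algebra.
Set Implicit Arguments. Unset Strict Implicit. Unset Printing Implicit Defensive.
Import Order.TTheory GRing.Theory Num.Theory.
Local Open Scope ring_scope.

Definition is_metric (R : realFieldType) (M : Type) (d : M -> M -> R) : Prop :=
  [/\ forall x y, 0 <= d x y,
      forall x y, d x y = 0 <-> x = y,
      forall x y, d x y = d y x &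
      forall x y z, d x z <= d x y + d y z].

Definition seqmin (R : realFieldType) (s : seq R) : R :=
  foldr Order.min (head 0 s) s.

Section Knn.
Variables (R : realFieldType) (M : Type) (d : M -> M -> R) (n : nat)
          (pts : 'I_n -> M).
(* The point set P = {pts i | i < n}; the index of pts i is i. *)

Definition pd (x y : 'I_n) : R := d (pts x) (pts y).

(* d_S(p,i): radius of the smallest closed ball centered at p containing at
   least i points of S.  The smallest such radius is always one of the
   distances d(p,s), s in S, so it is the minimum of those distances r with
   #{t in S | d(p,t) <= r} >= i. *)
Definition dS (S : {set 'I_n}) (p : 'I_n) (i : nat) : R :=
  seqmin [seq pd p s | s <- enum S & leq i #|[set t in S | pd p t <= pd p s]|].

Definition knn_lt (p s t : 'I_n) : bool :=
  (pd p s < pd p t) || ((pd p s == pd p t) && (nat_of_ord s < nat_of_ord t)%N).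

Definition NS (S : {set 'I_n}) (p : 'I_n) (i : nat) : {set 'I_n} :=
  [set s in S | (#|[set t in S | knn_lt p t s]| < i)%N].

Definition cost (S : {set 'I_n}) (i : nat) : R := \sum_(p : 'I_n) dS S p i.

Definition optcost (j i : nat) : R :=
  seqmin [seq cost X i | X <- enum [set X : {set 'I_n} | #|X| == j]].
End Knn.

(* Main.v *)
Require Import Defs.
From HB Require Import structures.
From mathcomp Require Import all_boot all_order all_algebra.
From mathcomp Require Import lra.
Import Order.TTheory GRing.Theory Num.Theory.
Local Open Scope ring_scope.


Section S.
Variable R : realFieldType.

Lemma foldr_min_le (a : R) (s : seq R) x : x \in a :: s -> foldr Order.min a s <= x.
Proof.
elim: s x => [|y s IH] x /=; first by rewrite inE => /eqP->.
rewrite !inE ge_min => /orP[/eqP->|/orP[/eqP->|H]].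
- by rewrite IH ?orbT // inE eqxx.
- by rewrite lexx.
- by rewrite IH ?orbT // inE H orbT.
Qed.

Lemma foldr_min_in (a : R) (s : seq R) : foldr Order.min a s \in a :: s.
Proof.
elim: s => [|y s IH] /=; first by rewrite inE.
rewrite minEle; case: ifP => _; first by rewrite !inE eqxx orbT.
move: IH; rewrite !inE => /orP[->|->] //; by rewrite !orbT.
Qed.

Lemma seqmin_le (s : seq R) x : x \in s -> seqmin s <= x.
Proof. case: s => // y s H; rewrite /seqmin; apply: foldr_min_le; by rewrite inE H orbT. Qed.

Lemma seqmin_in (s : seq R) : s != [::] -> seqmin s \in s.
Proof.
case: s => // y s _; rewrite /seqmin.
have := foldr_min_in y (y::s); rewrite inE => /orP[/eqP->|//]; by rewrite inE eqxx.
Qed.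

Lemma exmax (T : finType) (A : {set T}) (f : T -> R) :
  A != set0 -> exists2 s, s \in A & forall t, t \in A -> f t <= f s.
Proof.
case/set0Pn => s0 Hs0.
case: (@arg_maxP _ _ _ s0 (mem A) f Hs0) => s Hs Hmax.
by exists s.
Qed.
End S.

Section K.
Variables (R : realFieldType) (M : Type) (d : M -> M -> R) (n : nat)
          (pts : 'I_n -> M).
Local Notation pd := (pd d pts).
Local Notation dS := (dS d pts).

Lemma dS_le (S A : {set 'I_n}) p i (r : R) : A \subset S -> (i <= #|A|)%N -> (0 < i)%N ->
  (forall t, t \in A -> pd p t <= r) -> dS S p i <= r.
Proof.
move=> AS iA i0 Hr.
have A0 : A != set0 by rewrite -card_gt0 (leq_trans i0 iA).
case: (@exmax _ _ A (pd p) A0) => s sA smax.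
apply: le_trans (Hr _ sA).
apply: seqmin_le; apply: map_f; rewrite mem_filter mem_enum (subsetP AS _ sA) andbT.
apply: leq_trans iA _; apply: subset_leq_card; apply/subsetP => t tA.
by rewrite inE (subsetP AS _ tA) smax.
Qed.

Lemma dS_wit (S : {set 'I_n}) p i : (0 < i)%N -> (i <= #|S|)%N ->
  exists2 s, s \in S & dS S p i = pd p s /\ leq i #|[set t in S | pd p t <= pd p s]|.
Proof.
move=> i0 iS.
set L := [seq pd p s | s <- enum S & leq i #|[set t in S | pd p t <= pd p s]|].
have : L != [::].
  have S0 : S != set0 by rewrite -card_gt0 (leq_trans i0 iS).
  case: (@exmax _ _ S (pd p) S0) => s sS smax.
  have : pd p s \in L.
    apply: map_f; rewrite mem_filter mem_enum sS andbT.
    apply: leq_trans iS _; apply: subset_leq_card; apply/subsetP => t tA.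
    by rewrite inE tA smax.
  by case: (L).
move/seqmin_in; rewrite /dS -/L => /mapP[s]; rewrite mem_filter mem_enum => /andP[H1 H2] ->.
by exists s.
Qed.
End K.

Section K.
Variables (R : realFieldType) (M : Type) (d : M -> M -> R) (n : nat)
          (pts : 'I_n -> M).
Local Notation pd := (pd d pts).
Local Notation dS := (dS d pts).
Local Notation knn_lt := (knn_lt d pts).
Local Notation NS := (NS d pts).

Lemma knn_irr p s : knn_lt p s s = false.
Proof. by rewrite /knn_lt ltxx eqxx ltnn. Qed.

Lemma knn_trans p s t u : knn_lt p s t -> knn_lt p t u -> knn_lt p s u.
Proof.
rewrite /knn_lt => /orP[h1|/andP[/eqP e1 h1]] /orP[h2|/andP[/eqP e2 h2]].
- by rewrite (lt_trans h1 h2).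
- by rewrite -e2 h1.
- by rewrite e1 h2.
- by rewrite e1 e2 eqxx (ltn_trans h1 h2) orbT.
Qed.

Lemma knn_total p s t : s != t -> knn_lt p s t || knn_lt p t s.
Proof.
move=> st; rewrite /knn_lt.
case: (ltgtP (pd p s) (pd p t)) => //= e.
case: (ltngtP s t) => // /val_inj e'; by rewrite e' eqxx in st.
Qed.

Definition rk p (s : 'I_n) : nat := #|[set t | knn_lt p t s]|.

Lemma rk_lt p s : (rk p s < n)%N.
Proof.
rewrite /rk -[X in (_ < X)%N](card_ord n) -cardsT; apply: proper_card; apply/properP; split.
  by apply/subsetP => u; rewrite in_setT.
by exists s; rewrite ?inE ?knn_irr.
Qed.

Lemma rk_mono p s t : knn_lt p s t -> (rk p s < rk p t)%N.
Proof.
move=> st; rewrite /rk; apply: proper_card; apply/properP; split.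
  by apply/subsetP => u; rewrite !inE => us; apply: knn_trans _ _ _ _ us st.
by exists s; rewrite !inE ?knn_irr.
Qed.

Lemma rk_inj p : injective (rk p).
Proof.
move=> s t e; apply/eqP; apply: contraT => st.
by case/orP: (@knn_total p s t st) => H; have := rk_mono _ _ _ H; rewrite e ltnn.
Qed.

Definition rko p (s : 'I_n) : 'I_n := Ordinal (rk_lt p s).

Lemma rko_inj p : injective (rko p).
Proof. by move=> s t /(congr1 val) /rk_inj. Qed.

Lemma card_lt_ord m (hm : (m <= n)%N) : #|[set j : 'I_n | (j < m)%N]| = m.
Proof.
have -> : [set j : 'I_n | (j < m)%N] = [set widen_ord hm j | j : 'I_m].
  apply/setP => j; rewrite !inE; apply/idP/imsetP.
    by move=> jm; exists (Ordinal jm) => //; apply: val_inj.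
  by case=> j' _ ->; rewrite /= ltn_ord.
rewrite card_imset ?card_ord //.
by move=> a b e; apply: val_inj; exact: (congr1 val e).
Qed.

Lemma card_NS q l : (l <= n)%N -> #|NS [set: 'I_n] q l| = l.
Proof.
move=> ln.
have -> : NS [set: 'I_n] q l = rko q @^-1: [set j : 'I_n | (j < l)%N].
  apply/setP => s; rewrite !inE /=.
  have E : [set t in [set: 'I_n] | knn_lt q t s] = [set t | knn_lt q t s] by apply/setP => t; rewrite !inE.
  by rewrite E.
by rewrite card_preimset ?card_lt_ord //; apply: rko_inj.
Qed.

Lemma NS_close q l t : (0 < l)%N -> (l <= n)%N -> t \in NS [set: 'I_n] q l ->
  pd q t <= dS [set: 'I_n] q l.
Proof.
move=> l0 ln; rewrite inE in_setT /= => tl.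
case: (@dS_wit _ _ d _ pts [set: 'I_n] q l l0); first by rewrite cardsT card_ord.
move=> s _ [-> sl].
rewrite leNgt; apply/negP => st.
move: tl; rewrite ltnNge => /negP; apply.
apply: leq_trans sl _; apply: subset_leq_card; apply/subsetP => u.
rewrite !inE /= => us; rewrite /knn_lt (le_lt_trans us st) //.
Qed.
End K.

Theorem claim1 (R : realFieldType) (M : Type) (d : M -> M -> R)
  (hd : is_metric d) (n : nat) (pts : 'I_n -> M) (hinj : injective pts)
  (l k : nat) (hl : (1 <= l)%N) (hlk : (l <= k)%N) (hkn : (k <= n)%N)
  (c : R) (hc : 1 <= c)
  (Q : {set 'I_n}) (hQ : #|Q| = (k %/ l)%N)
  (hQc : cost d pts Q 1 <= c * optcost d pts (k %/ l) 1)
  (C : {set 'I_n}) (hC : #|C| = k)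
  (hNC : forall q, q \in Q -> NS d pts [set: 'I_n] q l \subset C) :
  cost d pts C l <= optcost d pts k l + 2 * c * optcost d pts (k %/ l) 1.
Proof.
case: hd => _ _ dsym dtri.
have ln : (l <= n)%N := leq_trans hlk hkn.
have Q1 : (1 <= #|Q|)%N by rewrite hQ divn_gt0.
have key : forall X : {set 'I_n}, #|X| = k -> forall p,
    dS d pts C p l <= dS d pts X p l + 2 * dS d pts Q p 1.
  move=> X hX p.
  case: (@dS_wit _ _ d _ pts Q p 1 isT Q1) => q qQ [-> _].
  have h1 : dS d pts C p l <= pd d pts p q + dS d pts [set: 'I_n] q l.
    apply: (@dS_le _ _ d _ pts C (NS d pts [set: 'I_n] q l)) => //.
    - exact: hNC.
    - by rewrite card_NS.
    move=> t tN; apply: le_trans (dtri _ (pts q) _) _; rewrite lerD2l.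
    exact: NS_close.
  have h2 : dS d pts [set: 'I_n] q l <= pd d pts q p + dS d pts X p l.
    case: (@dS_wit _ _ d _ pts X p l hl); first by rewrite hX.
    move=> s sX [-> sl].
    apply: (@dS_le _ _ d _ pts [set: 'I_n] [set t in X | pd d pts p t <= pd d pts p s]) => //.
    move=> t; rewrite inE => /andP[_ ts].
    apply: le_trans (dtri _ (pts p) _) _; by rewrite lerD2l.
  apply: le_trans h1 _; rewrite /pd dsym in h2 *.
  move: h2; set a := d (pts p) (pts q); set b := dS d pts [set: 'I_n] q l; set e := dS d pts X p l => h2; lra.
have [X hX ->] : exists2 X : {set 'I_n}, #|X| = k & optcost d pts k l = cost d pts X l.
  have : [seq cost d pts X l | X <- enum [set X : {set 'I_n} | #|X| == k]] != [::].
    have : cost d pts [set j : 'I_n | (j < k)%N] l \in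
        [seq cost d pts X l | X <- enum [set X : {set 'I_n} | #|X| == k]].
      by apply: map_f; rewrite mem_enum inE card_lt_ord.
    by case: (seq.map _ _).
  move/seqmin_in => /mapP[X]; rewrite mem_enum inE => /eqP hX e.
  by exists X.
apply: le_trans (_ : cost d pts X l + 2 * cost d pts Q 1 <= _).
  rewrite /cost mulr_sumr -big_split /=; apply: ler_sum => p _; exact: key.
rewrite -mulrA lerD2l ler_wpM2l //.
Qed.
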